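(* Let $S$ be a numerical semigroup with minimal generators $e<a_1<\dots<a_t$ and blowup $B$. Then ${\rm adj}(S)$ is finite, and $\operatorname{Ap}(B;e)\subseteq{\rm adj}(S)\subseteq B$.
   Context: A numerical semigroup is a submonoid of $(\mathbb N,+)$ with finite complement. ${\rm ord}(n;S)$ is the maximum of $\sum c_i$ over $(c_0,\dots,c_t)\in\mathbb N^{t+1}$ with $c_0e+\sum c_ia_i=n$. The blowup is $B=\langle e,a_1-e,\dots,a_t-e\rangle$. $\operatorname{Ap}(B;e)=\{w\in B:w-e\notin B\}$. ${\rm adj}(S)=\{s-{\rm ord}(s;S)e: s\in S\}$. *)

(* Defs.v *)
From mathcomp Require Import all_boot.
Set Implicit Arguments. Unset Strict Implicit. Unset Printing Implicit Defensive.

Definition lincomb (c g : seq nat) : nat :=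
  \sum_(i < size g) nth 0 c i * nth 0 g i.

Definition factorization (g : seq nat) (n : nat) (c : seq nat) : Prop :=
  size c = size g /\ lincomb c g = n.

Definition gen (g : seq nat) (n : nat) : Prop := exists c, factorization g n c.

Definition numerical_semigroup (S : nat -> Prop) : Prop :=
  [/\ S 0, (forall x y, S x -> S y -> S (x + y)) &
      exists N, forall n, N <= n -> S n].

Definition drop_nth (i : nat) (g : seq nat) : seq nat := take i g ++ drop i.+1 g.

Definition minimal_generators (S : nat -> Prop) (g : seq nat) : Prop :=
  [/\ sorted ltn g, (forall n, S n <-> gen g n) &
      forall i, i < size g -> ~ gen (drop_nth i g) (nth 0 g i)].

Definition is_ord (e : nat) (a : seq nat) (n k : nat) : Prop :=
  (exists c, factorization (e :: a) n c /\ sumn c = k) /\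
  (forall c, factorization (e :: a) n c -> sumn c <= k).

Definition blowup (e : nat) (a : seq nat) : nat -> Prop :=
  gen (e :: [seq x - e | x <- a]).

(* Apery set Ap(B; e) = { w in B : w - e notin B } (w - e taken in Z) *)
Definition apery (B : nat -> Prop) (e : nat) (w : nat) : Prop :=
  B w /\ ~ (e <= w /\ B (w - e)).

Definition adj (S : nat -> Prop) (e : nat) (a : seq nat) (x : nat) : Prop :=
  exists s k, S s /\ is_ord e a s k /\ x = s - k * e.

(* Main.v *)
Require Import Defs.
From mathcomp Require Import all_boot.
From mathcomp Require Import zify.

Lemma lincomb_cons x c y g : lincomb (x::c) (y::g) = x*y + lincomb c g.
Proof. by rewrite /lincomb /= big_ord_recl. Qed.
Lemma lincomb_nil c : lincomb c [::] = 0.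
Proof. by rewrite /lincomb big_ord0. Qed.

Lemma lincomb_shift e a c : size c = size a -> (forall x, x \in a -> e <= x) ->
  lincomb c a = sumn c * e + lincomb c (map (subn^~ e) a).
Proof.
elim: a c => [|y a IH] [|x c] //=.
move=> [Hs] Ha. rewrite !lincomb_cons (IH c Hs); last first.
    by move=> z Hz; apply: Ha; rewrite inE Hz orbT.
  have Hy : e <= y by apply: Ha; rewrite inE eqxx.
  have -> : y = e + (y - e) by lia.
  rewrite addKn. nia.
Qed.

Lemma fact_cons e a n c : factorization (e :: a) n c ->
  exists c0 c', c = c0 :: c' /\ size c' = size a /\ n = c0 * e + lincomb c' a.
Proof.
case: c => [|c0 c'] [//= Hs Hl]. exists c0, c'; split=> //; split; first by case: Hs.
by rewrite -Hl lincomb_cons.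
Qed.

Theorem corollary3p5 (S : nat -> Prop) (e : nat) (a : seq nat) :
  numerical_semigroup S ->
  minimal_generators S (e :: a) ->
  (exists N, forall x, adj S e a x -> x < N) /\
  (forall w, apery (blowup e a) e w -> adj S e a w) /\
  (forall x, adj S e a x -> blowup e a x).
Proof.
move=> [S0 Sadd [F HF]] [Hsort Hgen Hmin].
have ge_a : forall x, x \in a -> e <= x.
  move=> x Hx; have := allP (order_path_min ltn_trans Hsort) x Hx. lia.
have adjB : forall s c, factorization (e :: a) s c ->
    blowup e a (s - sumn c * e) /\ sumn c * e <= s.
  move=> s c /(fact_cons _ _ _ _) [c0 [c' [-> [Hs ->]]]].
  rewrite (lincomb_shift e a c' Hs ge_a) /=.
  split; last by nia.
  exists (0 :: c'); split; first by rewrite /= size_map Hs.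
  rewrite lincomb_cons. nia.
split; [|split].
- exists (F + e) => x [s [k [Ss [[[c [Hc Hsum]] Hmax] ->]]]].
  rewrite ltnNge; apply/negP => Hx.
  have [d Hd] : gen (e :: a) (s - (k+1)*e) by apply/Hgen/HF; nia.
  have [d0 [d' [Ed [Hs Hl]]]] := fact_cons _ _ _ _ Hd.
  have := Hmax ((d0 + (k+1)) :: d').
  have -> : sumn ((d0 + (k+1)) :: d') = d0 + k + 1 + sumn d' by rewrite /=; lia.
  move=> H. have : d0 + k + 1 + sumn d' <= k; last by lia.
  apply: H; split; first by rewrite /= Hs.
  rewrite lincomb_cons. nia.
- move=> w [[d Hd] Hnot].
  move: Hd => [Hsd Hld].
  case: d Hsd Hld => [|d0 d'] //= [Hsd'].
  rewrite size_map in Hsd'. rewrite lincomb_cons => Hw.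
  have d00 : d0 = 0.
    case: d0 Hw => // d0 Hw. exfalso; apply: Hnot; split; first nia.
    exists (d0 :: d'); split; first by rewrite /= size_map Hsd'.
    rewrite lincomb_cons. nia.
  subst d0.
  have Hs := lincomb_shift e a d' Hsd' ge_a.
  exists (lincomb d' a), (sumn d'). split; [|split].
  + apply/Hgen; exists (0 :: d'); split; first by rewrite /= Hsd'.
    by rewrite lincomb_cons.
  + split.
      exists (0 :: d'); split => //; split; first by rewrite /= Hsd'.
      by rewrite lincomb_cons.
    move=> c Hc; rewrite leqNgt; apply/negP => Hlt.
    have [c0 [c' [Ec [Hsc Hlc]]]] := fact_cons _ _ _ _ Hc.
    subst c. move: Hlt; rewrite /= => Hlt.
    have Hs2 := lincomb_shift e a c' Hsc ge_a.
    apply: Hnot. split; first nia.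
    exists ((c0 + sumn c' - sumn d' - 1) :: c'); split; first by rewrite /= size_map Hsc.
    rewrite lincomb_cons.
    have [t Ht] : exists t, c0 + sumn c' = sumn d' + 1 + t by exists (c0 + sumn c' - sumn d' - 1); lia.
    have -> : c0 + sumn c' - sumn d' - 1 = t by lia.
    nia.
  + nia.
- move=> x [s [k [Ss [[[c [Hc Hsum]] Hmax] ->]]]].
  by rewrite -Hsum; case: (adjB s c Hc).
Qed.
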